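(* Let $\sigma$ be a confined position on $K_{a,b}$ with sides $L$ ($|L|=a$) and $R$ ($|R|=b$), let $t\ge 1$, and suppose $\alpha_t(L)=ka$ for some positive integer $k$. Then $u_{t+1}(\sigma,w)-u_1(\sigma,w)=k$ for every $w\in R$.
   Context: Parallel chip-firing game: a position $\sigma$ assigns a nonnegative integer to each vertex; writing $\Phi_\sigma(v)$ for the number of neighbors $w$ of $v$ with $\sigma(w)\ge\deg(w)$, the step operator is $U\sigma(v)=\sigma(v)+\Phi_\sigma(v)$ if $\sigma(v)\le \deg(v)-1$ and $U\sigma(v)=\sigma(v)+\Phi_\sigma(v)-\deg(v)$ otherwise. A position is confined if every vertex satisfies $\Phi_\sigma(v)\le\sigma(v)\le\Phi_\sigma(v)+\deg(v)-1$. In $K_{a,b}$ each vertex of $L$ is adjacent exactly to all vertices of $R$ (so $L$-vertices have degree $b$, $R$-vertices degree $a$). $u_t(\sigma,v)=|\{s: 0\le s<t,\ U^s\sigma(v)\ge\deg(v)\}|$, and $\alpha_t(L)=\sum_{v\in L}u_t(\sigma,v)$. *)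

(* Defs.v *)
From mathcomp Require Import all_boot all_order all_algebra.
Set Implicit Arguments. Unset Strict Implicit. Unset Printing Implicit Defensive.

Section ChipFiring.
Variables (T : finType) (e : rel T).

Definition deg (v : T) : nat := #|[pred w | e v w]|.

Definition Phi (sigma : T -> nat) (v : T) : nat :=
  #|[pred w | e v w && (deg w <= sigma w)]|.

Definition U (sigma : T -> nat) : T -> nat :=
  fun v => if sigma v < deg v then sigma v + Phi sigma v
           else sigma v + Phi sigma v - deg v.

(* confined: Phi <= sigma v <= Phi + deg v - 1 (integer reading,
   i.e. sigma v < Phi + deg v). *)
Definition confined (sigma : T -> nat) : Prop :=
  forall v, Phi sigma v <= sigma v /\ sigma v < Phi sigma v + deg v.

Definition u (t : nat) (sigma : T -> nat) (v : T) : nat :=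
  count (fun s => deg v <= iter s U sigma v) (iota 0 t).

End ChipFiring.

(* Complete bipartite graph K_{a,b}: vertices inl i (side L, |L| = a)
   and inr j (side R, |R| = b); L-vertices adjacent exactly to R-vertices. *)
Definition Kab_adj (a b : nat) : rel ('I_a + 'I_b) :=
  fun x y => match x, y with
             | inl _, inr _ => true
             | inr _, inl _ => true
             | _, _ => false
             end.

Definition alphaL (a b t : nat) (sigma : 'I_a + 'I_b -> nat) : nat :=
  \sum_(i < a) u (@Kab_adj a b) t sigma (inl i).

(* Main.v *)
Require Import Defs.
From mathcomp Require Import all_boot all_order all_algebra.
Import GRing.Theory.
Local Open Scope ring_scope.

Lemma uS (T : finType) (e : rel T) t sigma v :
  u e t.+1 sigma v = (u e t sigma v + (deg e v <= iter t (U e) sigma v))%N.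
Proof. by rewrite /u -addn1 iotaD count_cat /= addn0 add0n. Qed.

Lemma Phi_le (T : finType) (e : rel T) sigma v : (Phi e sigma v <= deg e v)%N.
Proof. by apply: subset_leq_card; apply/subsetP => x /=; rewrite !inE => /andP[]. Qed.

Lemma card_pred_sum (a b : nat) (P : pred ('I_a + 'I_b)) :
  #|P| = (\sum_(i < a) (P (inl i) : nat) + \sum_(j < b) (P (inr j) : nat))%N.
Proof.
rewrite -sum1_card big_mkcond big_sumType /=.
by congr (_ + _)%N; apply: eq_bigr => i _; rewrite unfold_in; case: (P _).
Qed.

Lemma degR a b (w : 'I_b) : deg (@Kab_adj a b) (inr w) = a.
Proof.
rewrite /deg card_pred_sum /= [X in (_ + X)%N]big1 // addn0.
by rewrite sum_nat_const card_ord muln1.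
Qed.

Lemma PhiR a b (w : 'I_b) s :
  Phi (@Kab_adj a b) s (inr w) =
  (\sum_(i < a) (deg (@Kab_adj a b) (inl i) <= s (inl i)))%N.
Proof. by rewrite /Phi card_pred_sum /= [X in (_ + X)%N]big1 // addn0. Qed.

Lemma alphaS a b t sigma (w : 'I_b) :
  alphaL t.+1 sigma = (alphaL t sigma + Phi (@Kab_adj a b) (iter t (U (@Kab_adj a b)) sigma) (inr w))%N.
Proof.
rewrite /alphaL PhiR -big_split /=; apply: eq_bigr => i _; by rewrite uS.
Qed.

Lemma modlem d x0 xt U K : (0 < d)%N -> (x0 < d)%N -> (xt < d)%N ->
  (xt + d * U = x0 + d * K)%N -> U = K.
Proof.
move=> d0 h0 ht E.
have := congr1 (fun m => m %/ d)%N E.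
by rewrite ![(_ + d * _)%N]addnC ![(d * _)%N]mulnC !divnMDl // !divn_small // !addn0.
Qed.

Lemma split2 d x : (0 < d)%N -> (x < d + d)%N ->
  exists2 x', (x' < d)%N & x = (x' + d * (d <= x))%N.
Proof.
move=> d0 hx; case: leqP => h /=.
  exists (x - d)%N; last by rewrite muln1 subnK.
  by rewrite ltn_subLR.
by exists x; rewrite ?muln0 ?addn0.
Qed.

Theorem lemma3p3 (a b : nat) (sigma : 'I_a + 'I_b -> nat) (t k : nat) :
  confined (@Kab_adj a b) sigma ->
  (1 <= t)%N ->
  (0 < k)%N ->
  alphaL t sigma = (k * a)%N ->
  forall w : 'I_b,
    (u (@Kab_adj a b) t.+1 sigma (inr w))%:Z
      - (u (@Kab_adj a b) 1 sigma (inr w))%:Z = k%:Z.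
Proof.
move=> conf _ _ hal w.
set e := @Kab_adj a b.
set X := fun s => iter s (U e) sigma (inr w).
have dE : deg e (inr w) = a by apply: degR.
have [c1 c2] := conf (inr w).
set d := deg e (inr w).
have hal' : alphaL t sigma = (k * d)%N by rewrite hal /d dE.
have ha : (0 < d)%N.
  rewrite -(ltn_add2l (Phi e sigma (inr w))) addn0.
  exact: leq_ltn_trans c1 c2.
have hX : forall s, (X s < d + d)%N.
  elim=> [|s IH].
    rewrite /X /=; apply: leq_trans c2 _; rewrite leq_add2r; exact: Phi_le.
  rewrite /X /= /U -/(X s) -/d; have hP := @Phi_le _ e (iter s (U e) sigma) (inr w).
  rewrite -/d in hP; case: (ltnP (X s) d) => h.
    by rewrite -addSn; exact: leq_add h hP.
  rewrite ltn_subLR; last by apply: leq_trans h (leq_addr _ _).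
  by rewrite addnA -addSn; exact: leq_add IH hP.
have key : forall s, (X s + d * u e s sigma (inr w) = X 0 + alphaL s sigma)%N.
  elim=> [|s IH]; first by rewrite /u /alphaL /= muln0 big1.
  rewrite uS (@alphaS a b s sigma w) addnA -IH mulnDr.
  set P := Phi e (iter s (U e) sigma) (inr w).
  have -> : X s.+1 = (if X s < d then X s + P else X s + P - d)%N by [].
  case: (ltnP (X s) d) => h /=; first by rewrite muln0 addn0 addnAC.
  rewrite muln1 [(d * _ + d)%N]addnC addnA subnK; last by apply: leq_trans h (leq_addr _ _).
  by rewrite addnAC.
have u1 : u e 1 sigma (inr w) = (d <= X 0)%N by rewrite /u /= addn0.
have := key t; rewrite hal' u1 => E.
have [x0 hx0 E0] := @split2 d (X 0) ha (hX 0).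
have [xt hxt Et] := @split2 d (X t) ha (hX t).
rewrite uS -/(X t) -/d.
have -> : (u e t sigma (inr w) + (d <= X t) = k + (d <= X 0))%N.
  apply: (@modlem d x0 xt _ _ ha hx0 hxt).
  move: E Et E0; set ft := (d <= X t)%N; set f0 := (d <= X 0)%N => E Et E0.
  move: E; rewrite Et E0 (mulnC k d) => E.
  by rewrite !mulnDr addnA addnAC E [RHS]addnA addnAC.
by rewrite PoszD addrK.
Qed.
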